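(* Assume (A.1) and (A.2). Let $\mathcal F_{co}^+$, $U_{\mathbb V}$, $(p^*_{co},q^*_{co})$ and the lines $\mathbb L_1,\dots,\mathbb L_4$ be as in the context. (i) If $(p^*_{co},q^*_{co})$ lies in the interior of $\mathcal F^+_{co}$, then $$\max_{(p,q)\in\mathcal F^+_{co}} U_{\mathbb V}(p,q)=U_{\mathbb V}(p^*_{co},q^*_{co}).$$ (ii) If $(p^*_{co},q^*_{co})$ does not lie in the interior of $\mathcal F^+_{co}$, then the maximum of $U_{\mathbb V}$ over $\mathcal F^+_{co}$ is attained on one of the non-empty boundary pieces other than the lines $\{q=0\}$ and $\{p=0\}$: $$\max_{(p,q)\in\mathcal F^+_{co}} U_{\mathbb V}(p,q)=\max_{l\in\{1,2,3,4\}}\Big\{\max_{(p,q)\in\mathcal F^+_{co}\cap\mathbb L_l} U_{\mathbb V}(p,q)\Big\},$$ where by convention the maximum over an empty set is $0$.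
   Context: Model (a Stackelberg pricing game). Parameters: market potentials $\bar d_i,\bar d_j>0$; price sensitivities $\alpha_i,\alpha_j>0$; substitutability $\varepsilon\in(0,1]$; per-unit production costs $C_i,C_j\ge0$, per-unit raw-material cost $C_S\ge0$; operating costs $O_i,O_j,O_S\ge 0$. A coalition $\mathbb V$ (supplier plus in-house manufacturer $M_i$) quotes a consumer price $p$ and a wholesale price $q$; the out-house manufacturer $M_j$ then quotes a consumer price $\tilde p$. Demands: $D_i=(\bar d_i-\alpha_i p+\varepsilon\alpha_j\tilde p)^+$, $D_j=(\bar d_j-\alpha_j\tilde p+\varepsilon\alpha_i p)^+$. Maximal prices: $p_{mx}=(\bar d_i+\varepsilon\bar d_j)/\alpha_i$, $\tilde p_{mx}=(\bar d_j+\varepsilon\bar d_i)/\alpha_j$. Let $p_{sw}=\bar d_i/\alpha_i+\sqrt{\alpha_jO_j}/(\varepsilon\alpha_i)$ and $$\theta(p)=\begin{cases}\dfrac{\bar d_j+\varepsilon\alpha_ip-\alpha_jC_j-2\sqrt{\alpha_jO_j}}{\alpha_j}, & p<p_{sw},\\[2mm] \dfrac{\bar d_j+\varepsilon\bar d_i-\alpha_jC_j}{\alpha_j}-\dfrac{\alpha_jO_j}{\alpha_j(\varepsilon\alpha_ip-\varepsilon\bar d_i)}, & p\ge p_{sw}.\end{cases}$$ When $q\le\theta(p)$, $M_j$'s best response is $\tilde p^*(p,q)=\min\{(\bar d_j+\varepsilon\alpha_ip)/(2\alpha_j)+(C_j+q)/2,\ \tilde p_{mx}\}$ (when $q>\theta(p)$,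 $M_j$ does not operate). Co-existence region: $\mathcal F_{co}=\{(p,q)\in(0,\infty)^2: q\le\theta(p)\}$. For $(p,q)\in\mathcal F_{co}$ the coalition's utility is $$U_{\mathbb V}(p,q)=(\bar d_i-\alpha_ip+\varepsilon\alpha_j\tilde p^*(p,q))^+(p-C_i-C_S)+(\bar d_j+\varepsilon\alpha_ip-\alpha_j\tilde p^*(p,q))^+(q-C_S)-O_i-O_S.$$ Unconstrained function: $U(p,q)$ is the same expression with $(\cdot)^+$ removed and $\tilde p^*(p,q)$ replaced by $(\bar d_j+\varepsilon\alpha_ip)/(2\alpha_j)+(C_j+q)/2$; equivalently $U(p,q)=w_1p^2+w_2pq+w_3q^2+w_4p+w_5q+w_6$ with $w_1=-\alpha_i(1-\varepsilon^2/2)$, $w_2=\varepsilon(\alpha_i+\alpha_j)/2$, $w_3=-\alpha_j/2$, $w_4=\tfrac12\big(2\bar d_i+\varepsilon\bar d_j+\varepsilon\alpha_jC_j-\varepsilon\alpha_iC_S+2\alpha_i(1-\varepsilon^2/2)(C_i+C_S)\big)$, $w_5=-\varepsilon\alpha_j(C_i+C_S)/2+(\bar d_j-\alpha_jC_j+\alpha_jC_S)/2$, and $w_6$ a constant. Its critical point is $p^*_{co}=-(2w_3w_4-w_2w_5)/(4w_1w_3-w_2^2)$, $q^*_{co}=-(w_2p^*_{co}+w_5)/(2w_3)$. Define $\phi(p)=(\bar d_j+2\varepsilon\bar d_i-\varepsilon\alpha_ip-\alpha_jC_j)/\alpha_j$ and $\psi(q)=\big(2\bar d_i+\varepsilon\bar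 d_j+\varepsilon\alpha_j(C_j+q)\big)/((2-\varepsilon^2)\alpha_i)$. Then $$\mathcal F^+_{co}=\{(p,q)\in[0,\infty)^2: p\le\min\{p_{mx},\psi(q)\},\ q\le\min\{\theta(p),\phi(p)\}\},$$ the region where both manufacturers have positive demand and $M_j$'s price is unsaturated. Lines: $\mathbb L_1=\{q=\phi(p)\}$, $\mathbb L_2=\{p=\psi(q)\}$, $\mathbb L_3=\{q=(\bar d_j+\varepsilon\alpha_ip-\alpha_jC_j-2\sqrt{\alpha_jO_j})/\alpha_j\}$, $\mathbb L_4=\{p=p_{mx}\}$. Assumption (A.1): $\bar d_i\ge\alpha_i(C_S+C_i)+2\sqrt{\alpha_i(O_S+O_i)}$ and $\bar d_j\ge\alpha_j(C_S+C_j)+2\max\{\sqrt{2\alpha_j(O_S+O_i)},\sqrt{\alpha_jO_j}\}$. Assumption (A.2): $\varepsilon\le 2\sqrt{\alpha_jO_j}/(\alpha_jC_i)$. *)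

(* Defs.v *)
From HB Require Import structures.
From mathcomp Require Import all_boot all_order all_algebra.
From mathcomp Require Import all_classical all_reals topology normedtype.
Set Implicit Arguments. Unset Strict Implicit. Unset Printing Implicit Defensive.
Import Order.TTheory GRing.Theory Num.Theory.
Import numFieldNormedType.Exports.
Local Open Scope ring_scope.
Local Open Scope classical_set_scope.

Record params (R : realType) := Params {
  di : R; dj : R;        (* market potentials \bar d_i, \bar d_j *)
  ai : R; aj : R;        (* price sensitivities alpha_i, alpha_j *)
  eps : R;               (* substitutability epsilon *)
  Ci : R; Cj : R; CS : R;(* per-unit costs *)
  Oi : R; Oj : R; OS : R (* operating costs *)
}.

Section Model.
Variables (R : realType) (P : params R).
Local Notation di := (di P). Local Notation dj := (dj P).
Local Notation ai := (ai P). Local Notation aj := (aj P).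
Local Notation eps := (eps P).
Local Notation Ci := (Ci P). Local Notation Cj := (Cj P). Local Notation CS := (CS P).
Local Notation Oi := (Oi P). Local Notation Oj := (Oj P). Local Notation OS := (OS P).

Definition posp (x : R) : R := Num.max 0 x.

Definition p_mx : R := (di + eps * dj) / ai.
Definition pt_mx : R := (dj + eps * di) / aj.
Definition p_sw : R := di / ai + Num.sqrt (aj * Oj) / (eps * ai).

Definition theta (p : R) : R :=
  if p < p_sw then (dj + eps * ai * p - aj * Cj - 2 * Num.sqrt (aj * Oj)) / aj
  else (dj + eps * di - aj * Cj) / aj - (aj * Oj) / (aj * (eps * ai * p - eps * di)).

(* unsaturated best response of M_j *)
Definition pt_un (p q : R) : R := (dj + eps * ai * p) / (2 * aj) + (Cj + q) / 2.
(* best response of M_j when q <= theta p *)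
Definition pt_star (p q : R) : R := Num.min (pt_un p q) pt_mx.

Definition UV (p q : R) : R :=
  posp (di - ai * p + eps * aj * pt_star p q) * (p - Ci - CS)
  + posp (dj + eps * ai * p - aj * pt_star p q) * (q - CS) - Oi - OS.

Definition w1 : R := - ai * (1 - eps ^+ 2 / 2).
Definition w2 : R := eps * (ai + aj) / 2.
Definition w3 : R := - aj / 2.
Definition w4 : R := (2 * di + eps * dj + eps * aj * Cj - eps * ai * CS
                      + 2 * ai * (1 - eps ^+ 2 / 2) * (Ci + CS)) / 2.
Definition w5 : R := - eps * aj * (Ci + CS) / 2 + (dj - aj * Cj + aj * CS) / 2.

Definition p_co : R := - (2 * w3 * w4 - w2 * w5) / (4 * w1 * w3 - w2 ^+ 2).
Definition q_co : R := - (w2 * p_co + w5) / (2 * w3).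

Definition phi (p : R) : R := (dj + 2 * eps * di - eps * ai * p - aj * Cj) / aj.
Definition psi (q : R) : R :=
  (2 * di + eps * dj + eps * aj * (Cj + q)) / ((2 - eps ^+ 2) * ai).

Definition Fplus : set (R * R) :=
  [set x | 0 <= x.1 /\ 0 <= x.2 /\ x.1 <= Num.min p_mx (psi x.2)
           /\ x.2 <= Num.min (theta x.1) (phi x.1)].

Definition L1 : set (R * R) := [set x | x.2 = phi x.1].
Definition L2 : set (R * R) := [set x | x.1 = psi x.2].
Definition L3 : set (R * R) :=
  [set x | x.2 = (dj + eps * ai * x.1 - aj * Cj - 2 * Num.sqrt (aj * Oj)) / aj].
Definition L4 : set (R * R) := [set x | x.1 = p_mx].

Definition A1 : Prop :=
  ai * (CS + Ci) + 2 * Num.sqrt (ai * (OS + Oi)) <= di /\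
  aj * (CS + Cj) + 2 * Num.max (Num.sqrt (2 * aj * (OS + Oi))) (Num.sqrt (aj * Oj)) <= dj.
(* (A.2) eps <= 2 sqrt(aj Oj)/(aj Ci), cleared of the denominator
   (with Ci = 0 the bound is +oo, i.e. vacuous) *)
Definition A2 : Prop := eps * (aj * Ci) <= 2 * Num.sqrt (aj * Oj).

Definition standing : Prop :=
  0 < di /\ 0 < dj /\ 0 < ai /\ 0 < aj /\ 0 < eps /\ eps <= 1 /\
  0 <= Ci /\ 0 <= Cj /\ 0 <= CS /\ 0 <= Oi /\ 0 <= Oj /\ 0 <= OS.
End Model.

Definition is_max (R : realType) (S : set (R * R)) (f : R * R -> R) (m : R) : Prop :=
  (exists2 x, S x & f x = m) /\ (forall x, S x -> f x <= m).

Definition is_max0 (R : realType) (S : set (R * R)) (f : R * R -> R) (m : R) : Prop :=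
  (S = set0 /\ m = 0) \/ is_max S f m.

(* Main.v *)
Require Import Defs.
From HB Require Import structures.
From mathcomp Require Import all_boot all_order all_algebra.
From mathcomp Require Import all_classical all_reals topology normedtype.
From mathcomp Require Import ring lra derive.
Import Order.TTheory GRing.Theory Num.Theory.
Import numFieldNormedType.Exports.
Local Open Scope ring_scope.
Local Open Scope classical_set_scope.
Set Implicit Arguments. Unset Strict Implicit. Unset Printing Implicit Defensive.

Ltac pos := repeat first [ assumption | apply: ltW; assumption
  | apply: mulr_ge0 | apply: addr_ge0 | apply: divr_ge0 | apply: mulr_gt0 | apply: divr_gt0 | apply: addr_gt0 ].

Definition th1 (R : realType) (P : params R) (p : R) : R :=
  (dj P + eps P * ai P * p - aj P * Cj P - 2 * Num.sqrt (aj P * Oj P)) / aj P.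

Definition Fp (R : realType) (P : params R) : set (R * R) :=
  [set x | 0 <= x.1 /\ 0 <= x.2 /\ x.1 <= p_mx P /\ x.1 <= psi P x.2
           /\ x.2 <= phi P x.1 /\ x.2 <= th1 P x.1].

Lemma min_theta (R : realType) (P : params R) p :
  standing P -> Num.min (theta P p) (phi P p) = Num.min (th1 P p) (phi P p).
Proof.
case=> hdi [hdj [hai [haj [he [he1 [hCi [hCj [hCS [hOi [hOj hOS]]]]]]]]]].
rewrite /theta; case: ifP => // /negbT; rewrite -leNgt => hp.
set s := Num.sqrt (aj P * Oj P).
have s0 : 0 <= s by rewrite sqrtr_ge0.
have ss : s ^+ 2 = aj P * Oj P by rewrite sqr_sqrtr // mulr_ge0 // ltW.
set x := eps P * ai P * p - eps P * di P.
have hx : s <= x.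
  move: hp; rewrite /p_sw -/s => hp.
  have : eps P * ai P * (di P / ai P + s / (eps P * ai P)) <= eps P * ai P * p.
    by rewrite ler_pM2l // mulr_gt0.
  have -> : eps P * ai P * (di P / ai P + s / (eps P * ai P)) = eps P * di P + s.
    by field; apply/andP; split; rewrite gt_eqF.
  rewrite /x; lra.
have h1 : phi P p <= th1 P p.
  rewrite /phi /th1 -/s ler_pM2r ?invr_gt0 //; rewrite /x in hx; lra.
have h2 : phi P p <= (dj P + eps P * di P - aj P * Cj P) / aj P - aj P * Oj P / (aj P * (eps P * ai P * p - eps P * di P)).
  rewrite -/x.
  have [x0|xpos] := eqVneq x 0.
    rewrite x0 mulr0 invr0 mulr0 subr0 /phi ler_pM2r ?invr_gt0 //.
    rewrite /x in x0; lra.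
  have xp : 0 < x by rewrite lt_neqAle eq_sym xpos /= (le_trans s0 hx).
  have -> : aj P * Oj P / (aj P * x) = Oj P / x by field; apply/andP; split; rewrite gt_eqF.
  have : Oj P / x <= x / aj P.
    rewrite ler_pdivrMr // mulrAC ler_pdivlMr //.
    have : aj P * Oj P <= x * x by rewrite -ss; nra.
    lra.
  rewrite /phi /x; move=> h.
  have -> : (dj P + 2 * eps P * di P - eps P * ai P * p - aj P * Cj P) / aj P =
    (dj P + eps P * di P - aj P * Cj P) / aj P - (eps P * ai P * p - eps P * di P) / aj P.
    by field; rewrite gt_eqF //.
  rewrite /x in h; lra.
by rewrite !(minElt _ (phi P p)) !ltNge h1 h2.
Qed.

Lemma Fplus_eq (R : realType) (P : params R) : standing P -> Fplus P = Fp P.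
Proof.
move=> st; apply/seteqP; split => x /=; rewrite /Fplus /Fp /= min_theta //;
  rewrite !le_min.
  by case=> h1 [h2 [/andP[h3 h4] /andP[h5 h6]]]; do !split.
by case=> h1 [h2 [h3 [h4 [h5 h6]]]]; do !split => //; apply/andP; split.
Qed.

Definition Uu (R : realType) (P : params R) (p q : R) : R :=
  (di P - ai P * p + eps P * aj P * pt_un P p q) * (p - Ci P - CS P)
  + (dj P + eps P * ai P * p - aj P * pt_un P p q) * (q - CS P) - Oi P - OS P.

Lemma st_unpack (R : realType) (P : params R) : standing P ->
  [/\ 0 < di P, 0 < dj P, 0 < ai P, 0 < aj P & 0 < eps P] /\
  [/\ eps P <= 1, 0 <= Ci P, 0 <= Cj P, 0 <= CS P & 0 <= Oi P] /\ (0 <= Oj P /\ 0 <= OS P).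
Proof. by case=> ? [? [? [? [? [? [? [? [? [? [? ?]]]]]]]]]]. Qed.

Lemma Di_eq (R : realType) (P : params R) p q : standing P ->
  di P - ai P * p + eps P * aj P * pt_un P p q = (2 - eps P ^+ 2) * ai P / 2 * (psi P q - p).
Proof.
move=> /st_unpack [[hdi hdj hai haj he] [[he1 _ _ _ _] _]].
have h2 : 2 - eps P ^+ 2 != 0 by rewrite gt_eqF //; nra.
rewrite /pt_un /psi; field; rewrite h2 !gt_eqF //.
Qed.

Lemma Dj_eq (R : realType) (P : params R) p q : standing P ->
  dj P + eps P * ai P * p - aj P * pt_un P p q
  = aj P * (th1 P p - q) / 2 + Num.sqrt (aj P * Oj P).
Proof.
move=> /st_unpack [[hdi hdj hai haj he] _].
rewrite /pt_un /th1; field; rewrite gt_eqF //.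
Qed.

Lemma ptun_eq (R : realType) (P : params R) p q : standing P ->
  pt_mx P - pt_un P p q = (phi P p - q) / 2.
Proof.
move=> /st_unpack [[hdi hdj hai haj he] _].
rewrite /pt_un /pt_mx /phi; field; rewrite gt_eqF //.
Qed.

Lemma UV_Uu (R : realType) (P : params R) x : standing P -> Fp P x ->
  UV P x.1 x.2 = Uu P x.1 x.2.
Proof.
move=> st [h1 [h2 [h3 [h4 [h5 h6]]]]].
have [[hdi hdj hai haj he] [[he1 _ _ _ _] [hOj _]]] := st_unpack st.
rewrite /UV /Uu /pt_star.
have -> : Num.min (pt_un P x.1 x.2) (pt_mx P) = pt_un P x.1 x.2.
  apply/min_idPl; rewrite -subr_ge0 ptun_eq //; lra.
rewrite /posp !max_r //.
  rewrite Dj_eq //; have := sqrtr_ge0 (aj P * Oj P).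
  have : 0 <= aj P * (th1 P x.1 - x.2) by rewrite mulr_ge0 // ?subr_ge0 // ltW.
  lra.
rewrite Di_eq //; apply: mulr_ge0; last by rewrite subr_ge0.
apply: mulr_ge0 => //; last lra. apply: mulr_ge0; [nra | lra].
Qed.

Lemma Uu_quad (R : realType) (P : params R) p q : standing P ->
  Uu P p q = w1 P * p ^+ 2 + w2 P * p * q + w3 P * q ^+ 2 + w4 P * p + w5 P * q
             + Uu P 0 0.
Proof.
move=> /st_unpack [[hdi hdj hai haj he] _].
rewrite /Uu /pt_un /w1 /w2 /w3 /w4 /w5; field; rewrite gt_eqF //.
Qed.

Definition G1 (R : realType) (P : params R) (p q : R) := 2 * w1 P * p + w2 P * q + w4 P.
Definition G2 (R : realType) (P : params R) (p q : R) := w2 P * p + 2 * w3 P * q + w5 P.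
Definition det (R : realType) (P : params R) := 4 * w1 P * w3 P - w2 P ^+ 2.

Lemma move1 (R : realType) (P : params R) p q t : standing P ->
  Uu P (p + t) q - Uu P p q = t * G1 P p q + w1 P * t ^+ 2.
Proof. by move=> st; rewrite (@Uu_quad _ _ (p + t) q st) (@Uu_quad _ _ p q st) /G1; ring. Qed.

Lemma move2 (R : realType) (P : params R) p q t : standing P ->
  Uu P p (q + t) - Uu P p q = t * G2 P p q + w3 P * t ^+ 2.
Proof. by move=> st; rewrite (@Uu_quad _ _ p (q + t) st) (@Uu_quad _ _ p q st) /G2; ring. Qed.

Lemma A1_unpack (R : realType) (P : params R) : standing P -> A1 P ->
  ai P * (CS P + Ci P) <= di P /\ aj P * (CS P + Cj P) + 2 * Num.sqrt (aj P * Oj P) <= dj P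
  /\ (di P - ai P * (Ci P + CS P)) ^+ 2 >= 4 * ai P * (Oi P + OS P).
Proof.
move=> st [h1 h2].
have [[hdi hdj hai haj he] [[he1 hCi hCj hCS hOi] [hOj hOS]]] := st_unpack st.
have s1 := sqrtr_ge0 (ai P * (OS P + Oi P)).
have ss1 : Num.sqrt (ai P * (OS P + Oi P)) ^+ 2 = ai P * (OS P + Oi P).
  by rewrite sqr_sqrtr // mulr_ge0 // ?addr_ge0 // ltW.
have hm : Num.sqrt (aj P * Oj P) <= Num.max (Num.sqrt (2 * aj P * (OS P + Oi P))) (Num.sqrt (aj P * Oj P)).
  by rewrite le_max lexx orbT.
split; first by lra.
split; first by lra.
have h3 : 2 * Num.sqrt (ai P * (OS P + Oi P)) <= di P - ai P * (Ci P + CS P) by lra.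
nra.
Qed.


Lemma crit_abs (R : realType) (a ai aj e b X Y Ki Kj Di Dj : R) :
  0 < ai -> 0 < aj -> 0 < e -> e <= 1 ->
  a = ai * (1 - e ^+ 2 / 2) -> b = e * (ai + aj) / 2 -> 0 < Ki -> 0 <= Kj ->
  Di = a * X - e * ai / 2 * Y -> Dj = aj / 2 * Y - e * aj / 2 * X ->
  Di = Ki - a * X + e * aj / 2 * Y -> Dj = Kj + e * ai / 2 * X - aj / 2 * Y ->
  0 < Di -> 0 < Dj -> 0 < 2 * a * aj - b ^+ 2.
Proof.
move=> hai haj he he1 ea eb hKi hKj c1 c2 d1 d2 hDi hDj.
have hYX : 0 < Y - e * X.
  have e2 : Dj = aj / 2 * (Y - e * X) by rewrite c2; field.
  have h2' : 0 < aj / 2 by rewrite divr_gt0.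
  by move: hDj; rewrite e2 pmulr_rgt0.
have h1 : 0 < e * ai / 2 * (Y - e * X) by apply: mulr_gt0 => //; apply: divr_gt0 => //; apply: mulr_gt0.
have e3 : ai * (1 - e ^+ 2) * X = Di + e * ai / 2 * (Y - e * X).
  by rewrite c1 ea; field.
have h2 : 0 < ai * (1 - e ^+ 2) * X by rewrite e3 addr_gt0.
have h3 : 0 <= ai * (1 - e ^+ 2).
  have : 0 <= 1 - e ^+ 2 by rewrite expr2; nra.
  by apply: mulr_ge0; rewrite ltW.
have hX : 0 < X.
  rewrite ltNge; apply/negP => hX; move: h2; rewrite ltNge => /negP; apply.
  exact: mulr_ge0_le0.
have eKi : Ki = 2 * a * X - b * Y.
  by move: c1; rewrite d1 eb => h; lra.
have eKj : Kj = aj * Y - b * X.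
  by move: c2; rewrite d2 eb => h; lra.
have key : aj * Ki + b * Kj = (2 * a * aj - b ^+ 2) * X by rewrite eKi eKj; field.
have hb : 0 <= b by rewrite eb; apply: divr_ge0 => //; apply: mulr_ge0; lra.
have : 0 < (2 * a * aj - b ^+ 2) * X.
  by rewrite -key; apply: ltr_pwDl; [apply: mulr_gt0 | apply: mulr_ge0].
by rewrite pmulr_lgt0.
Qed.

Lemma crit (R : realType) (P : params R) p q : standing P -> A1 P ->
  G1 P p q = 0 -> G2 P p q = 0 ->
  0 < di P - ai P * p + eps P * aj P * pt_un P p q ->
  0 < dj P + eps P * ai P * p - aj P * pt_un P p q -> 0 < det P.
Proof.
move=> st hA hg1 hg2 hDi hDj.
have [[hdi hdj hai haj he] [[he1 hCi hCj hCS hOi] [hOj hOS]]] := st_unpack st.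
have [a1 [a2 _]] := A1_unpack st hA.
have s0 := sqrtr_ge0 (aj P * Oj P).
have edet : det P = 2 * (ai P * (1 - eps P ^+ 2 / 2)) * aj P - (eps P * (ai P + aj P) / 2) ^+ 2.
  by rewrite /det /w1 /w2 /w3; field.
rewrite edet.
pose Ki := di P + eps P * dj P / 2 + eps P * aj P * Cj P / 2 - ai P * (1 - eps P ^+ 2 / 2) * (Ci P + CS P)
          + eps P * aj P * CS P / 2.
pose Kj := (dj P + eps P * ai P * (Ci P + CS P) - aj P * Cj P - aj P * CS P) / 2.
apply: (@crit_abs R (ai P * (1 - eps P ^+ 2 / 2)) (ai P) (aj P) (eps P) _
   (p - (Ci P + CS P)) (q - CS P) Ki Kj _ _ hai haj he he1 erefl erefl _ _ _ _ _ _ hDi hDj).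
- have h1 : 0 <= ai P * (Ci P + CS P) * eps P ^+ 2 by pos.
  have h2 : 0 < eps P * dj P by pos.
  have h3 : 0 <= eps P * aj P * Cj P by pos.
  have h4 : 0 <= eps P * aj P * CS P by pos.
  have -> : Ki = di P - ai P * (Ci P + CS P) + ai P * (Ci P + CS P) * eps P ^+ 2 / 2
     + eps P * dj P / 2 + eps P * aj P * Cj P / 2 + eps P * aj P * CS P / 2.
    by rewrite /Ki; field.
  lra.
- have h1 : 0 <= eps P * ai P * (Ci P + CS P) by pos.
  rewrite /Kj; lra.
- move: hg1; rewrite /G1 /w1 /w2 /w4 /pt_un => h.
  apply/eqP; rewrite -subr_eq0; apply/eqP; rewrite -h; field; rewrite gt_eqF //.
- move: hg2; rewrite /G2 /w2 /w3 /w5 /pt_un => hh.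
  apply/eqP; rewrite -subr_eq0; apply/eqP; rewrite -hh; field; rewrite gt_eqF //.
- rewrite /Ki /pt_un; field; rewrite gt_eqF //.
- rewrite /Kj /pt_un; field; rewrite gt_eqF //.
Qed.


Lemma closed_ge0 (R : realType) (f : R * R -> R) : continuous f -> closed [set x | 0 <= f x].
Proof.
move=> fc; have -> : [set x | 0 <= f x] = f @^-1` [set y | 0 <= y] by [].
by apply: preimage_closed; [move=> x _; exact: fc | exact: closed_ge].
Qed.

Lemma closed_eq0 (R : realType) (f : R * R -> R) : continuous f -> closed [set x | f x = 0].
Proof.
move=> fc; have -> : [set x | f x = 0] = f @^-1` [set y | y = 0] by [].
by apply: preimage_closed; [move=> x _; exact: fc | exact: closed_eq].
Qed.

Lemma open_gt0 (R : realType) (f : R * R -> R) : continuous f -> open [set x | 0 < f x].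
Proof.
move=> fc; have -> : [set x | 0 < f x] = f @^-1` [set y | 0 < y] by [].
by move/continuousP: fc; apply; exact: open_gt.
Qed.

Lemma aff_cont (R : realType) (a b c : R) :
  continuous (fun x : R * R => a * x.1 + b * x.2 + c).
Proof.
move=> x; apply: cvgD; last exact: cvg_cst.
apply: cvgD; apply: cvgM; try exact: cvg_cst. exact: cvg_fst. exact: cvg_snd.
Qed.

Lemma quad_cont (R : realType) (a b c d e f : R) :
  continuous (fun x : R * R => a * x.1 ^+ 2 + b * x.1 * x.2 + c * x.2 ^+ 2 + d * x.1 + e * x.2 + f).
Proof.
move=> x; apply: cvgD; last exact: cvg_cst.
apply: cvgD; last by apply: cvgM; [exact: cvg_cst | exact: cvg_snd].
apply: cvgD; last by apply: cvgM; [exact: cvg_cst | exact: cvg_fst].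
apply: cvgD; last by apply: cvgM; [exact: cvg_cst | rewrite expr2; apply: cvgM; exact: cvg_snd].
apply: cvgD; last by apply: cvgM; [apply: cvgM; [exact: cvg_cst | exact: cvg_fst] | exact: cvg_snd].
by apply: cvgM; [exact: cvg_cst | rewrite expr2; apply: cvgM; exact: cvg_fst].
Qed.
Lemma ball_pair (R : realType) (x : R * R) (e u v : R) :
  `|u| < e -> `|v| < e -> ball x e (x.1 + u, x.2 + v).
Proof.
move=> hu hv; rewrite /ball /= /prod_ball /= -!ball_normE /ball_ /=.
by rewrite !opprD !addrA !subrr !add0r !normrN.
Qed.
Lemma nb (R : realType) (x : R * R) (A : set (R * R)) : nbhs x A ->
  exists2 e, 0 < e & forall u v, `|u| < e -> `|v| < e -> A (x.1 + u, x.2 + v).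
Proof.
move/nbhs_ballP => [e e0 he]; exists e => // u v hu hv; apply: he; exact: ball_pair.
Qed.
Lemma nb2 (R : realType) (x : R * R) (A : set (R * R)) :
  (exists2 e, 0 < e & forall u v, `|u| < e -> `|v| < e -> A (x.1 + u, x.2 + v)) -> nbhs x A.
Proof.
move=> [e e0 he]; apply/nbhs_ballP; exists e => // y.
rewrite /ball /= /prod_ball /= -!ball_normE /ball_ /= => [[h1 h2]].
have := he (y.1 - x.1) (y.2 - x.2).
have -> : x.1 + (y.1 - x.1) = y.1 by ring.
have -> : x.2 + (y.2 - x.2) = y.2 by ring.
case: y h1 h2 => a b /= h1 h2; apply; by rewrite distrC.
Qed.

Lemma cont_aff (R : realType) (f : R * R -> R) (a b c : R) :
  (forall x, f x = a * x.1 + b * x.2 + c) -> continuous f.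
Proof. move=> h; have -> : f = (fun x => a * x.1 + b * x.2 + c) by apply: funext. exact: aff_cont. Qed.

Section Conts.
Variables (R : realType) (P : params R).
Hypothesis st : standing P.

Lemma cont_pmx : continuous (fun x : R * R => p_mx P - x.1).
Proof. by apply: (@cont_aff _ _ (-1) 0 (p_mx P)) => x; ring. Qed.
Lemma cont_psi : continuous (fun x : R * R => psi P x.2 - x.1).
Proof.
have [[hdi hdj hai haj he] [[he1 _ _ _ _] _]] := st_unpack st.
have h2 : 2 - eps P ^+ 2 != 0 by rewrite gt_eqF //; nra.
apply: (@cont_aff _ _ (-1) (eps P * aj P / ((2 - eps P ^+ 2) * ai P))
   ((2 * di P + eps P * dj P + eps P * aj P * Cj P) / ((2 - eps P ^+ 2) * ai P))) => x.
rewrite /psi; field; rewrite h2 gt_eqF //.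
Qed.
Lemma cont_phi : continuous (fun x : R * R => phi P x.1 - x.2).
Proof.
have [[hdi hdj hai haj he] _] := st_unpack st.
apply: (@cont_aff _ _ (- (eps P * ai P / aj P)) (-1) ((dj P + 2 * eps P * di P - aj P * Cj P) / aj P)) => x.
rewrite /phi; field; rewrite gt_eqF //.
Qed.
Lemma cont_th1 : continuous (fun x : R * R => th1 P x.1 - x.2).
Proof.
have [[hdi hdj hai haj he] _] := st_unpack st.
apply: (@cont_aff _ _ (eps P * ai P / aj P) (-1) ((dj P - aj P * Cj P - 2 * Num.sqrt (aj P * Oj P)) / aj P)) => x.
rewrite /th1; field; rewrite gt_eqF //.
Qed.
Lemma cont_Uu : continuous (fun x : R * R => Uu P x.1 x.2).
Proof.
have -> : (fun x : R * R => Uu P x.1 x.2) = (fun x : R * R => w1 P * x.1 ^+ 2 + w2 P * x.1 * x.2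
   + w3 P * x.2 ^+ 2 + w4 P * x.1 + w5 P * x.2 + Uu P 0 0).
  by apply: funext => x; rewrite (@Uu_quad _ _ x.1 x.2 st).
exact: quad_cont.
Qed.
End Conts.

Section Topo.
Variables (R : realType) (P : params R).
Hypothesis st : standing P.

Lemma Fp_closed : closed (Fp P).
Proof.
have -> : Fp P = [set x | 0 <= x.1] `&` [set x | 0 <= x.2] `&` [set x | 0 <= p_mx P - x.1]
  `&` [set x | 0 <= psi P x.2 - x.1] `&` [set x | 0 <= phi P x.1 - x.2]
  `&` [set x | 0 <= th1 P x.1 - x.2].
  apply/seteqP; split => x /=; rewrite /Fp /= !subr_ge0.
    by case=> h1 [h2 [h3 [h4 [h5 h6]]]].
  by case=> [[[[[h1 h2] h3] h4] h5] h6].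
repeat apply: closedI; apply: closed_ge0.
- by apply: (@cont_aff _ _ 1 0 0) => x; ring.
- by apply: (@cont_aff _ _ 0 1 0) => x; ring.
- exact: cont_pmx.
- exact: cont_psi.
- exact: cont_phi.
- exact: cont_th1.
Qed.

Lemma phi_dec p : 0 <= p -> phi P p <= phi P 0.
Proof.
have [[hdi hdj hai haj he] _] := st_unpack st.
move=> hp; rewrite /phi ler_pM2r ?invr_gt0 //.
have : 0 <= eps P * ai P * p by pos.
lra.
Qed.

Lemma Fp_compact : compact (Fp P).
Proof.
apply: (@subclosed_compact _ _ (`[0, p_mx P]%classic `*` `[0, phi P 0]%classic)).
- exact: Fp_closed.
- by apply: compact_setX; exact: segment_compact.
- move=> x [h1 [h2 [h3 [h4 [h5 h6]]]]]; split => /=; rewrite in_itv /= ?h1 ?h2 ?h3 //=.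
  exact: le_trans h5 (phi_dec h1).
Qed.

Lemma L1_closed : closed (L1 P).
Proof.
have -> : L1 P = [set x | phi P x.1 - x.2 = 0].
  by apply/seteqP; split => x /=; rewrite /L1 /=; [move=> ->; rewrite subrr | move/eqP; rewrite subr_eq0 => /eqP ->].
exact: closed_eq0 (cont_phi st).
Qed.
Lemma L2_closed : closed (L2 P).
Proof.
have -> : L2 P = [set x | psi P x.2 - x.1 = 0].
  by apply/seteqP; split => x /=; rewrite /L2 /=; [move=> ->; rewrite subrr | move/eqP; rewrite subr_eq0 => /eqP ->].
exact: closed_eq0 (cont_psi st).
Qed.
Lemma L3_closed : closed (L3 P).
Proof.
have -> : L3 P = [set x | th1 P x.1 - x.2 = 0].
  by apply/seteqP; split => x /=; rewrite /L3 /th1 /=; [move=> ->; rewrite subrr | move/eqP; rewrite subr_eq0 => /eqP ->].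
exact: closed_eq0 (cont_th1 st).
Qed.
Lemma L4_closed : closed (L4 P).
Proof.
have -> : L4 P = [set x | p_mx P - x.1 = 0].
  by apply/seteqP; split => x /=; rewrite /L4 /=; [move=> ->; rewrite subrr | move/eqP; rewrite subr_eq0 => /eqP ->].
exact: (closed_eq0 (@cont_pmx R P)).
Qed.

Definition Ostrict : set (R * R) :=
  [set x | 0 < p_mx P - x.1] `&` [set x | 0 < psi P x.2 - x.1] `&` [set x | 0 < phi P x.1 - x.2]
  `&` [set x | 0 < th1 P x.1 - x.2].

Lemma Ostrict_open : open Ostrict.
Proof.
repeat apply: openI; apply: open_gt0.
exact: cont_pmx. exact: cont_psi. exact: cont_phi. exact: cont_th1.
Qed.

End Topo.

Lemma small_pos (R : realType) (g h d : R) : 0 < d -> 0 < g ->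
  exists t, [/\ 0 < t, t < d & 0 < t * g + h * t ^+ 2].
Proof.
move=> hd hg.
pose t := Num.min (d / 2) (g / (2 * (`|h| + 1))).
have hh : 0 <= `|h| by [].
have h1 : 0 < 2 * (`|h| + 1) by apply: mulr_gt0; lra.
have t0 : 0 < t by rewrite /t lt_min; apply/andP; split; apply: divr_gt0 => //.
have td : t <= d / 2 by rewrite /t ge_min lexx.
have tg : t * (2 * (`|h| + 1)) <= g.
  by rewrite -ler_pdivlMr // /t ge_min lexx orbT.
exists t; split => //; first by lra.
have : - (`|h| * t ^+ 2) <= h * t ^+ 2.
  rewrite -mulNr ler_pM2r ?exprn_gt0 //.
  by rewrite lerNl -normrN ler_norm.
rewrite expr2 => h2.
have : 0 < t * (g - `|h| * t).
  apply: mulr_gt0 => //. nra.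
nra.
Qed.

Section Main.
Variables (R : realType) (P : params R).
Hypotheses (st : standing P) (hA1 : A1 P) (hA2 : A2 P).

Lemma w_facts : [/\ w1 P < 0, 0 < w2 P, w3 P < 0, 0 < w4 P & 0 <= w5 P].
Proof.
have [[hdi hdj hai haj he] [[he1 hCi hCj hCS hOi] [hOj hOS]]] := st_unpack st.
have [a1 [a2 _]] := A1_unpack st hA1.
have s0 := sqrtr_ge0 (aj P * Oj P).
have e2 : eps P ^+ 2 <= 1 by rewrite expr2; nra.
split.
- rewrite /w1; have : 0 < ai P * (1 - eps P ^+ 2 / 2) by apply: mulr_gt0 => //; lra.
  lra.
- by rewrite /w2; apply: divr_gt0 => //; apply: mulr_gt0 => //; lra.
- by rewrite /w3; lra.
- rewrite /w4; apply: divr_gt0 => //.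
  have : 0 <= ai P * Ci P * (2 - eps P ^+ 2) by apply: mulr_ge0; [pos | lra].
  have : 0 <= ai P * CS P * (2 - eps P ^+ 2 - eps P) by apply: mulr_ge0; [pos | lra].
  have : 0 < eps P * dj P by pos.
  have : 0 <= eps P * aj P * Cj P by pos.
  lra.
- rewrite /w5.
  have : 0 <= aj P * CS P * (1 - eps P) by apply: mulr_ge0; [pos | lra].
  have h2 := hA2; rewrite /A2 in h2.
  have : 0 <= aj P * CS P by pos.
  lra.
Qed.

Lemma quad_diff x1 x2 p q :
  Uu P x1 x2 - Uu P p q = w1 P * (x1 - p) ^+ 2 + w2 P * (x1 - p) * (x2 - q) + w3 P * (x2 - q) ^+ 2
    + (x1 - p) * G1 P p q + (x2 - q) * G2 P p q.
Proof. rewrite (@Uu_quad _ _ x1 x2 st) (@Uu_quad _ _ p q st) /G1 /G2; ring. Qed.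

Lemma concave_le x1 x2 p q : 0 < det P -> G1 P p q = 0 -> G2 P p q = 0 ->
  Uu P x1 x2 <= Uu P p q.
Proof.
move=> hd g1 g2; rewrite -subr_le0 quad_diff g1 g2 !mulr0 !addr0.
have [w1n _ _ _ _] := w_facts.
set a := x1 - p; set b := x2 - q.
have key : 4 * w1 P * (w1 P * a ^+ 2 + w2 P * a * b + w3 P * b ^+ 2)
   = (2 * w1 P * a + w2 P * b) ^+ 2 + det P * b ^+ 2 by rewrite /det; ring.
have h1 : 0 <= (2 * w1 P * a + w2 P * b) ^+ 2 + det P * b ^+ 2.
  by apply: addr_ge0; [exact: sqr_ge0 | apply: mulr_ge0; [exact: ltW | exact: sqr_ge0]].
rewrite -key in h1.
set Q := w1 P * a ^+ 2 + w2 P * a * b + w3 P * b ^+ 2 in h1 *.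
move: h1 w1n; clear; move: (w1 P) Q => ww qq h1 h2; nra.
Qed.

Lemma G_co : det P != 0 -> G1 P (p_co P) (q_co P) = 0 /\ G2 P (p_co P) (q_co P) = 0.
Proof.
move=> hd.
have [_ _ w3n _ _] := w_facts.
have w3z : w3 P != 0 by rewrite lt_eqF.
have hd' : 4 * w1 P * w3 P - w2 P ^+ 2 != 0 by [].
split.
  rewrite /G1 /q_co /p_co; field. by rewrite w3z hd'.
rewrite /G2 /q_co; field. by rewrite w3z.
Qed.

Lemma part_i : interior (Fplus P) (p_co P, q_co P) ->
  is_max (Fplus P) (fun x => UV P x.1 x.2) (UV P (p_co P) (q_co P)).
Proof.
rewrite (Fplus_eq st) => /nb [e e0 he] /=.
have [[hdi hdj hai haj he0] [[he1 hCi hCj hCS hOi] [hOj hOS]]] := st_unpack st.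
have e2 : `|e / 2| < e by rewrite ger0_norm; lra.
have e2' : `|- (e / 2)| < e by rewrite normrN.
have z : `|0 : R| < e by rewrite normr0.
have [hm1 _] := he _ _ e2' z.
have [_ [_ [_ [hp4 _]]]] := he _ _ e2 z.
have [_ [_ [_ [_ [_ hq6]]]]] := he _ _ z e2.
have h0 := he _ _ z z.
rewrite /= !addr0 in hm1 hp4 hq6 h0.
have pp : 0 < p_co P by lra.
have pd : 0 < psi P (q_co P) - p_co P by lra.
have qd : 0 < th1 P (p_co P) - q_co P by lra.
case: (eqVneq (det P) 0) => hd.
  move: pp; rewrite /p_co.
  have -> : 4 * w1 P * w3 P - w2 P ^+ 2 = 0 by [].
  by rewrite invr0 mulr0 ltxx.
have [g1 g2] := G_co hd.
have dpos : 0 < det P.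
  apply: (crit st hA1 g1 g2).
    rewrite Di_eq //; apply: mulr_gt0 => //; apply: divr_gt0 => //.
    apply: mulr_gt0 => //; rewrite expr2; nra.
  rewrite Dj_eq //; have := sqrtr_ge0 (aj P * Oj P).
  have : 0 < aj P * (th1 P (p_co P) - q_co P) by pos.
  lra.
split; first by exists (p_co P, q_co P).
move=> x hx.
rewrite (UV_Uu st hx) (@UV_Uu _ _ (p_co P, q_co P) st h0) /=.
exact: concave_le.
Qed.

End Main.

Section Main2.
Variables (R : realType) (P : params R).
Hypotheses (st : standing P) (hA1 : A1 P) (hA2 : A2 P).

Lemma Fp00 : Fp P (0, 0).
Proof.
have [[hdi hdj hai haj he] [[he1 hCi hCj hCS hOi] [hOj hOS]]] := st_unpack st.
have [a1 [a2 _]] := A1_unpack st hA1.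
have s0 := sqrtr_ge0 (aj P * Oj P).
have e2 : 0 < 2 - eps P ^+ 2 by rewrite expr2; nra.
rewrite /Fp /=; do ![split => //].
- by rewrite /p_mx; apply: divr_ge0; [pos | lra].
- rewrite /psi; apply: divr_ge0; last by pos.
  have : 0 <= eps P * dj P by pos.
  have : 0 <= eps P * aj P * (Cj P + 0) by pos; lra.
  lra.
- rewrite /phi; apply: divr_ge0; last lra.
  have : 0 <= aj P * CS P by pos.
  have : 0 <= eps P * di P by pos.
  have : 0 <= 2 * eps P * di P by pos.
  have : 0 = eps P * ai P * 0 by rewrite mulr0.
  lra.
- rewrite /th1; apply: divr_ge0; last lra.
  have : 0 <= aj P * CS P by pos.
  rewrite mulr0; lra.
Qed.

Lemma Ostrict_Fp y : Ostrict P y -> 0 <= y.1 -> 0 <= y.2 -> Fp P y.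
Proof.
move=> [[[h3 h4] h5] h6] h1 h2; rewrite /Fp; move: h3 h4 h5 h6 => /=.
rewrite !subr_gt0 => h3 h4 h5 h6.
by do !split => //; apply: ltW.
Qed.

Lemma boundary_max : ~ interior (Fplus P) (p_co P, q_co P) ->
  exists y, Fp P y /\ (L1 P y \/ L2 P y \/ L3 P y \/ L4 P y) /\
    (forall x, Fp P x -> Uu P x.1 x.2 <= Uu P y.1 y.2).
Proof.
move=> nint.
have [[hdi hdj hai haj he] [[he1 hCi hCj hCS hOi] [hOj hOS]]] := st_unpack st.
have [w1n w2p w3n w4p w5p] := w_facts st hA1 hA2.
have wc : {within Fp P, continuous (fun x : R * R => Uu P x.1 x.2)}.
  by apply: continuous_subspaceT; exact: cont_Uu.
have [c cin cmax] := @compact_EVT_max _ _ (fun x : R * R => Uu P x.1 x.2) (Fp P)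
   (ex_intro _ _ Fp00) (Fp_compact st) wc.
have cF : Fp P c by exact: set_mem.
have cM : forall x, Fp P x -> Uu P x.1 x.2 <= Uu P c.1 c.2 by move=> x /mem_set /cmax.
case: (pselect (L1 P c \/ L2 P c \/ L3 P c \/ L4 P c)) => hL.
  by exists c.
exfalso.
have cF' := cF.
case: cF' => h1 [h2 [h3 [h4 [h5 h6]]]].
have hO : Ostrict P c.
  rewrite /Ostrict /= !subr_gt0; split; first split; first split.
  - rewrite lt_neqAle h3 andbT; apply/negP => /eqP h; apply: hL; by do 3 right.
  - rewrite lt_neqAle h4 andbT; apply/negP => /eqP h; apply: hL; by right; left.
  - rewrite lt_neqAle h5 andbT; apply/negP => /eqP h; apply: hL; by left.
  - rewrite lt_neqAle h6 andbT; apply/negP => /eqP h; apply: hL; by do 2 right; left.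
have := Ostrict_open st; rewrite openE => /(_ c hO) /nb [e e0 hB].
have improve : forall (d : R -> R * R) (g h e' : R), 0 < e' ->
    (forall t, 0 < t -> t < e' -> Fp P (d t)) ->
    (forall t, Uu P (d t).1 (d t).2 - Uu P c.1 c.2 = t * g + h * t ^+ 2) -> g <= 0.
  move=> d g h e' e'0 hd hdiff; rewrite leNgt; apply/negP => g0.
  have [t [t0 te ht]] := small_pos h e'0 g0.
  have := cM _ (hd t t0 te); rewrite -subr_ge0 -opprB oppr_ge0 hdiff => hle.
  by move: ht; rewrite ltNge hle.
have G1n : G1 P c.1 c.2 <= 0.
  apply: (improve (fun t => (c.1 + t, c.2)) _ (w1 P) e e0).
    move=> t t0 te; apply: Ostrict_Fp => /=; last by [].
      by have := hB t 0; rewrite addr0; apply; [rewrite gtr0_norm | rewrite normr0].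
    lra.
  by move=> t /=; rewrite move1.
have G2n : G2 P c.1 c.2 <= 0.
  apply: (improve (fun t => (c.1, c.2 + t)) _ (w3 P) e e0).
    move=> t t0 te; apply: Ostrict_Fp => /=; first last.
      lra. by [].
    by have := hB 0 t; rewrite addr0; apply; [rewrite normr0 | rewrite gtr0_norm].
  by move=> t /=; rewrite move2.
have G1p : 0 < c.1 -> 0 <= G1 P c.1 c.2.
  move=> c1p; rewrite -oppr_le0.
  have m0 : 0 < Num.min e c.1 by rewrite lt_min e0 c1p.
  apply: (improve (fun t => (c.1 - t, c.2)) _ (w1 P) _ m0).
    move=> t t0 te; move: te; rewrite lt_min => /andP [te tc].
    apply: Ostrict_Fp => /=; last by [].
      by have := hB (- t) 0; rewrite addr0; apply; [rewrite normrN gtr0_norm | rewrite normr0].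
    lra.
  by move=> t /=; rewrite move1 //; ring.
have G2p : 0 < c.2 -> 0 <= G2 P c.1 c.2.
  move=> c2p; rewrite -oppr_le0.
  have m0 : 0 < Num.min e c.2 by rewrite lt_min e0 c2p.
  apply: (improve (fun t => (c.1, c.2 - t)) _ (w3 P) _ m0).
    move=> t t0 te; move: te; rewrite lt_min => /andP [te tc].
    apply: Ostrict_Fp => /=; first last.
      lra. by [].
    by have := hB 0 (- t); rewrite addr0; apply; [rewrite normr0 | rewrite normrN gtr0_norm].
  by move=> t /=; rewrite move2 //; ring.
have w2c1 : 0 <= w2 P * c.1 by apply: mulr_ge0 => //; exact: ltW.
have w2c2 : 0 <= w2 P * c.2 by apply: mulr_ge0 => //; exact: ltW.
case: (eqVneq c.2 0) => c20.
  move: G2n; rewrite /G2 c20 mulr0 addr0 => G2n.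
  have c10 : w2 P * c.1 = 0 by lra.
  move: c10 => /eqP; rewrite mulf_eq0 gt_eqF //= => /eqP c10.
  move: G1n; rewrite /G1 c10 c20 !mulr0 !add0r; lra.
have c2p : 0 < c.2 by rewrite lt_neqAle eq_sym c20.
case: (eqVneq c.1 0) => c10.
  move: G1n; rewrite /G1 c10 mulr0 add0r; lra.
have c1p : 0 < c.1 by rewrite lt_neqAle eq_sym c10.
have g1 : G1 P c.1 c.2 = 0 by have := G1p c1p; lra.
have g2 : G2 P c.1 c.2 = 0 by have := G2p c2p; lra.
have dpos : 0 < det P.
  apply: (crit st hA1 g1 g2).
    rewrite Di_eq //; apply: mulr_gt0; last by move: hO => [[[_ h] _] _].
    apply: divr_gt0 => //; apply: mulr_gt0 => //; rewrite expr2; nra.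
  rewrite Dj_eq //; have := sqrtr_ge0 (aj P * Oj P).
  have : 0 < aj P * (th1 P c.1 - c.2) by apply: mulr_gt0 => //; move: hO => [_ h].
  lra.
have w3z : w3 P != 0 by rewrite lt_eqF.
have dz : det P != 0 by rewrite gt_eqF.
have ec1 : c.1 = p_co P.
  have k : det P * c.1 = - (2 * w3 P * w4 P - w2 P * w5 P).
    have : 2 * w3 P * G1 P c.1 c.2 - w2 P * G2 P c.1 c.2 = 0 by rewrite g1 g2; ring.
    rewrite /G1 /G2 /det => hh; apply/eqP; rewrite -subr_eq0; apply/eqP; rewrite -hh; ring.
  rewrite /p_co -k; have dz' : 4 * w1 P * w3 P - w2 P ^+ 2 != 0 by [].
  rewrite -/(det P); field; exact: dz.
have ec2 : c.2 = q_co P.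
  have k2 : 2 * w3 P * c.2 = - (w2 P * c.1 + w5 P) by move: g2; rewrite /G2; lra.
  rewrite /q_co -ec1 -k2; field; exact: w3z.
apply: nint; rewrite (Fplus_eq st).
have -> : (p_co P, q_co P) = c by rewrite -ec1 -ec2; case: (c).
apply: nb2.
have m0 : 0 < Num.min e (Num.min c.1 c.2) by rewrite !lt_min e0 c1p c2p.
exists (Num.min e (Num.min c.1 c.2)) => // u v; rewrite !lt_min => /and3P [ue uc1 uc2] /and3P [ve vc1 vc2].
apply: Ostrict_Fp => /=.
- exact: hB.
- have := ler_norm (- u); rewrite normrN; lra.
- have := ler_norm (- v); rewrite normrN; lra.
Qed.
End Main2.

Section Main3.
Variables (R : realType) (P : params R).
Hypotheses (st : standing P) (hA1 : A1 P) (hA2 : A2 P).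

Lemma exists_nonneg : exists2 x, Fp P x & 0 <= Uu P x.1 x.2.
Proof.
have [[hdi hdj hai haj he] [[he1 hCi hCj hCS hOi] [hOj hOS]]] := st_unpack st.
have [a1 [a2 a3]] := A1_unpack st hA1.
have s0 := sqrtr_ge0 (aj P * Oj P).
have e2 : 0 < 2 - eps P ^+ 2 by rewrite expr2; nra.
have hain : ai P != 0 by rewrite gt_eqF.
have hajn : aj P != 0 by rewrite gt_eqF.
have e2n : 2 - eps P ^+ 2 != 0 by rewrite gt_eqF.
set c := Ci P + CS P.
set D := di P - ai P * c.
have D0 : 0 <= D by rewrite /D /c; lra.
set p0 := (di P + ai P * c) / (2 * ai P).
have c0 : 0 <= c by rewrite /c; lra.
have aic : 0 <= ai P * c by apply: mulr_ge0 => //; lra.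
have p00 : 0 <= p0 by rewrite /p0; apply: divr_ge0; lra.
exists (p0, CS P).
  rewrite /Fp /=; split; first exact: p00.
  split => //.
  split.
    rewrite -subr_ge0.
    have -> : p_mx P - p0 = (D + 2 * eps P * dj P) / (2 * ai P) by rewrite /p_mx /p0 /D; field.
    apply: divr_ge0; last by pos; lra.
    have : 0 <= eps P * dj P by pos.
    lra.
  split.
    rewrite -subr_ge0.
    have -> : psi P (CS P) - p0 = ((2 - eps P ^+ 2) * D + 2 * eps P ^+ 2 * di P + 2 * eps P * dj P
        + 2 * eps P * aj P * (Cj P + CS P)) / (2 * (2 - eps P ^+ 2) * ai P).
      by rewrite /psi /p0 /D /c; field; rewrite hain e2n.
    apply: divr_ge0; last by apply: mulr_ge0; [apply: mulr_ge0 => //; lra | lra].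
    have : 0 <= (2 - eps P ^+ 2) * D by apply: mulr_ge0 => //; lra.
    have : 0 <= eps P ^+ 2 * di P by apply: mulr_ge0; [exact: sqr_ge0 | lra].
    have : 0 <= eps P * dj P by pos.
    have : 0 <= eps P * aj P * (Cj P + CS P) by pos.
    lra.
  split.
    rewrite -subr_ge0.
    have -> : phi P p0 - CS P = ((dj P - aj P * (CS P + Cj P)) + eps P * D / 2 + eps P * di P) / aj P.
      by rewrite /phi /p0 /D /c; field; rewrite hain hajn.
    apply: divr_ge0; last lra.
    have : 0 <= eps P * D by pos.
    have : 0 <= eps P * di P by pos.
    lra.
  rewrite -subr_ge0.
  have -> : th1 P p0 - CS P = ((dj P - aj P * (CS P + Cj P) - 2 * Num.sqrt (aj P * Oj P))
     + eps P * (di P + ai P * c) / 2) / aj P.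
    by rewrite /th1 /p0 /c; field; rewrite hain hajn.
  apply: divr_ge0; last lra.
  have : 0 <= eps P * (di P + ai P * c) by apply: mulr_ge0; lra.
  lra.
rewrite /=.
set pt := pt_un P p0 (CS P).
have pt0 : 0 <= pt.
  have hp : 0 <= eps P * ai P * p0 by apply: mulr_ge0 => //; apply: mulr_ge0; lra.
  rewrite /pt /pt_un; apply: addr_ge0; apply: divr_ge0; lra.
have eU : Uu P p0 (CS P) = D ^+ 2 / (4 * ai P) + eps P * aj P * pt * (D / (2 * ai P)) - Oi P - OS P.
  by rewrite /Uu -/pt /p0 /D /c; field.
rewrite eU.
have h1 : Oi P + OS P <= D ^+ 2 / (4 * ai P).
  rewrite ler_pdivlMr; last by lra.
  by rewrite /D /c; lra.
have h2 : 0 <= eps P * aj P * pt * (D / (2 * ai P)) by apply: mulr_ge0; [apply: mulr_ge0 => //; apply: mulr_ge0; lra | apply: divr_ge0; lra].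
lra.
Qed.

Lemma piece_max (S : set (R * R)) : S `<=` Fp P -> closed S ->
  exists m, is_max0 S (fun x => UV P x.1 x.2) m.
Proof.
move=> sS cS.
case: (pselect (S = set0)) => S0; first by exists 0; left.
have S1 : S !=set0 by apply/set0P/eqP.
have cpt : compact S := subclosed_compact cS (Fp_compact st) sS.
have wc : {within S, continuous (fun x : R * R => Uu P x.1 x.2)}.
  by apply: continuous_subspaceT; exact: cont_Uu.
have [c cin cmax] := @compact_EVT_max _ _ _ _ S1 cpt wc.
have cS' : S c by exact: set_mem.
exists (UV P c.1 c.2); right; split; first by exists c.
move=> x Sx; rewrite (UV_Uu st (sS _ Sx)) (UV_Uu st (sS _ cS')).
exact: cmax (mem_set Sx).
Qed.
End Main3.

Lemma max0_le (R : realType) (P : params R) (S : set (R * R)) m M :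
  S `<=` Fplus P -> 0 <= M -> (forall x, Fplus P x -> UV P x.1 x.2 <= M) ->
  is_max0 S (fun x => UV P x.1 x.2) m -> m <= M.
Proof.
move=> sS M0 hM [[_ ->] // | [[x Sx <-] _]].
exact: hM (sS _ Sx).
Qed.

Lemma max0_ge (R : realType) (P : params R) (S : set (R * R)) m y :
  S y -> is_max0 S (fun x => UV P x.1 x.2) m -> UV P y.1 y.2 <= m.
Proof.
move=> Sy [[S0 _] | [_ h]]; last exact: h.
by move: Sy; rewrite S0.
Qed.

Unset Implicit Arguments.

Theorem theorem1 (R : realType) (P : params R) :
  standing P -> A1 P -> A2 P ->
  let U := fun x : R * R => UV P x.1 x.2 in
  let xco := (p_co P, q_co P) in
  (interior (Fplus P) xco -> is_max (Fplus P) U (U xco)) /\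
  (~ interior (Fplus P) xco ->
     exists M m1 m2 m3 m4,
       is_max (Fplus P) U M /\
       is_max0 (Fplus P `&` L1 P) U m1 /\ is_max0 (Fplus P `&` L2 P) U m2 /\
       is_max0 (Fplus P `&` L3 P) U m3 /\ is_max0 (Fplus P `&` L4 P) U m4 /\
       M = Num.max (Num.max m1 m2) (Num.max m3 m4)).
Proof.
move=> st hA1 hA2 U xco.
split; first exact: (part_i st hA1 hA2).
move=> nint.
have [y [Fy [Ly ymax]]] := boundary_max st hA1 hA2 nint.
have Feq := Fplus_eq st.
have sub : forall L : set (R * R), Fplus P `&` L `<=` Fp P by move=> L x [hx _]; rewrite -Feq.
have cl : forall L : set (R * R), closed L -> closed (Fplus P `&` L).
  by move=> L cL; rewrite Feq; exact: closedI (Fp_closed st) cL.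
have [m1 h1] := piece_max st (sub (L1 P)) (cl _ (L1_closed st)).
have [m2 h2] := piece_max st (sub (L2 P)) (cl _ (L2_closed st)).
have [m3 h3] := piece_max st (sub (L3 P)) (cl _ (L3_closed st)).
have [m4 h4] := piece_max st (sub (L4 P)) (cl _ (@L4_closed R P)).
have Fy' : Fplus P y by rewrite Feq.
have hM : forall x, Fplus P x -> UV P x.1 x.2 <= UV P y.1 y.2.
  move=> x; rewrite Feq => hx; rewrite (UV_Uu st hx) (UV_Uu st Fy); exact: ymax.
have M0 : 0 <= UV P y.1 y.2.
  have [x0 Fx0 Ux0] := exists_nonneg st hA1.
  by apply: le_trans Ux0 _; rewrite -(UV_Uu st Fx0); apply: hM; rewrite Feq.
have sub' : forall L : set (R * R), Fplus P `&` L `<=` Fplus P by move=> L x [].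
have le1 := max0_le (sub' _) M0 hM h1.
have le2 := max0_le (sub' _) M0 hM h2.
have le3 := max0_le (sub' _) M0 hM h3.
have le4 := max0_le (sub' _) M0 hM h4.
exists (UV P y.1 y.2), m1, m2, m3, m4.
split; first by split; [exists y | exact: hM].
do 4 (split; first by []).
apply/eqP; rewrite eq_le; apply/andP; split; last first.
  by rewrite !ge_max le1 le2 le3 le4.
rewrite !le_max.
case: Ly => [L|[L|[L|L]]].
- by rewrite (max0_ge (conj Fy' L) h1).
- by rewrite (max0_ge (conj Fy' L) h2) orbT.
- by rewrite (max0_ge (conj Fy' L) h3) /= orbT.
- by rewrite (max0_ge (conj Fy' L) h4) !orbT.
Qed.
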